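(* Let $A$ be a Hopf algebra with bijective antipode $S$, and let $\triangleright_1$ and $\triangleright_2$ be two actions of $A$ on an algebra $R$, each making $R$ a left $A$-module algebra. Suppose they are cocycle equivalent: there is a linear map $\gamma:A\to M(R)$ with $\gamma(1)=1$ such that for all $a,a'\in A$ and $x\in R$, (i) $\gamma(aa')=\sum\gamma(a_{(1)})\big(a_{(2)}\triangleright_1\gamma(a')\big)$, and (ii) $\sum(a_{(1)}\triangleright_2 x)\gamma(a_{(2)})=\sum\gamma(a_{(1)})(a_{(2)}\triangleright_1 x)$. Then the smash products $R\#_1 A$ and $R\#_2 A$ (built from $\triangleright_1$ and $\triangleright_2$ respectively) are isomorphic algebras.
   Context: $R$ is an algebra over $\mathbb C$, possibly without identity, with non-degenerate product; $M(R)$ its multiplier algebra. A left $A$-module algebra structure $\triangleright$ on $R$ means $R$ is a left $A$-module with $1\triangleright x=x$ and $a\triangleright(xx')=\sum(a_{(1)}\triangleright x)(a_{(2)}\triangleright x')$. The action $\triangleright_1$ is extended to $M(R)$ by letting $a\triangleright_1 m\in M(R)$ be the multiplier with $(a\triangleright_1 m)x=\sum a_{(1)}\triangleright_1(m(S(a_{(2)})\triangleright_1 x))$ and $x(a\triangleright_1 m)=\sum a_{(2)}\triangleright_1((S^{-1}(a_{(1)})\triangleright_1 x)m)$. The smash product $R\#_i A$ is $R\otimes A$ with product $(x\#_i a)(x'\#_i a')=\sum x(a_{(1)}\triangleright_i x')\#_i a_{(2)}a'$. *)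

(* Defs.v *)
From mathcomp Require Import all_boot all_order all_algebra.
From mathcomp Require Import complex Rstruct.
From Stdlib Require Rdefinitions.
Set Implicit Arguments. Unset Strict Implicit. Unset Printing Implicit Defensive.
Import GRing.Theory.
Local Open Scope ring_scope.

Notation CC := (complex Rdefinitions.R).

Definition lin {U W : lmodType CC} (f : U -> W) : Prop :=
  forall (c : CC) (u u' : U), f (c *: u + u') = c *: f u + f u'.

Definition bilin {U V W : lmodType CC} (f : U -> V -> W) : Prop :=
  (forall v, lin (fun u => f u v)) /\ (forall u, lin (f u)).

Definition trilin {U V X W : lmodType CC} (f : U -> V -> X -> W) : Prop :=
  (forall v x, lin (fun u => f u v x)) /\ (forall u x, lin (fun v => f u v x))
  /\ (forall u v, lin (f u v)).

(* The coproduct Delta(a) in A (x) A is represented by a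
   finite list of pairs (a_(1), a_(2)) whose sum of elementary tensors is
   Delta(a); every axiom below only uses Sweedler sums of multilinear
   expressions, so only the tensor Delta(a) matters. *)
Definition sw {A : Type} {V : nmodType} (cop : A -> seq (A * A)) (a : A)
  (f : A -> A -> V) : V := \sum_(p <- cop a) f p.1 p.2.

Definition is_hopf (A : algType CC) (cop : A -> seq (A * A)) (eps : A -> CC)
  (S : A -> A) : Prop :=
  [/\ (* Delta is linear *)
      forall (V : lmodType CC) (f : A -> A -> V), bilin f ->
        lin (fun a => sw cop a f),
      forall (V : lmodType CC) (f : A -> A -> A -> V), trilin f -> forall a,
        sw cop a (fun x y => sw cop x (fun u v => f u v y)) =
        sw cop a (fun x y => sw cop y (fun u v => f x u v)),
      (forall (V : lmodType CC) (f : A -> A -> V), bilin f -> forall a b,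
        sw cop (a * b) f = sw cop a (fun x y => sw cop b (fun u v => f (x * u) (y * v))))
      /\ (forall (V : lmodType CC) (f : A -> A -> V), bilin f -> sw cop 1 f = f 1 1),
      [/\ lin eps, forall a b, eps (a * b) = eps a * eps b, eps 1 = 1,
          forall a, sw cop a (fun x y => eps x *: y) = a &
          forall a, sw cop a (fun x y => eps y *: x) = a] &
      [/\ lin S,
          forall a, sw cop a (fun x y => S x * y) = eps a *: 1 &
          forall a, sw cop a (fun x y => x * S y) = eps a *: 1]].

Definition is_nd_algebra (R : lmodType CC) (mul : R -> R -> R) : Prop :=
  [/\ bilin mul,
      forall x y z, mul x (mul y z) = mul (mul x y) z,
      forall x, (forall y, mul x y = 0) -> x = 0 &
      forall x, (forall y, mul y x = 0) -> x = 0].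

(* Multipliers: m = (m_l, m_r) with m_l x = "m x" and m_r x = "x m". *)
Definition mult (R : lmodType CC) := ((R -> R) * (R -> R))%type.

Definition is_mult (R : lmodType CC) (mul : R -> R -> R) (m : mult R) : Prop :=
  [/\ lin m.1, lin m.2,
      forall x y, m.1 (mul x y) = mul (m.1 x) y,
      forall x y, m.2 (mul x y) = mul x (m.2 y) &
      forall x y, mul (m.2 x) y = mul x (m.1 y)].

Definition mone (R : lmodType CC) : mult R := (@id R, @id R).

Definition mmul (R : lmodType CC) (m n : mult R) : mult R :=
  (fun x => m.1 (n.1 x), fun x => n.2 (m.2 x)).

Definition msum (R : lmodType CC) (s : seq (mult R)) : mult R :=
  (fun x => \sum_(m <- s) m.1 x, fun x => \sum_(m <- s) m.2 x).

Definition msw (A : Type) (R : lmodType CC) (cop : A -> seq (A * A)) (a : A)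
  (f : A -> A -> mult R) : mult R :=
  msum [seq f p.1 p.2 | p <- cop a].

Definition is_mod_alg (A : algType CC) (cop : A -> seq (A * A))
  (R : lmodType CC) (mul : R -> R -> R) (act : A -> R -> R) : Prop :=
  [/\ bilin act,
      forall x, act 1 x = x,
      forall a b x, act (a * b) x = act a (act b x) &
      forall a x y, act a (mul x y) = sw cop a (fun a1 a2 => mul (act a1 x) (act a2 y))].

Definition actM (A : algType CC) (cop : A -> seq (A * A)) (S Sinv : A -> A)
  (R : lmodType CC) (act : A -> R -> R) (a : A) (m : mult R) : mult R :=
  (fun x => sw cop a (fun a1 a2 => act a1 (m.1 (act (S a2) x))),
   fun x => sw cop a (fun a1 a2 => act a2 (m.2 (act (Sinv a1) x)))).

Definition cocycle_equiv (A : algType CC) (cop : A -> seq (A * A)) (S Sinv : A -> A)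
  (R : lmodType CC) (mul : R -> R -> R) (act1 act2 : A -> R -> R)
  (gamma : A -> mult R) : Prop :=
  [/\ forall a, is_mult mul (gamma a),
      forall x, lin (fun a => (gamma a).1 x) /\ lin (fun a => (gamma a).2 x),
      gamma 1 = mone R,
      forall a a', gamma (a * a') =
        msw cop a (fun a1 a2 => mmul (gamma a1) (actM cop S Sinv act1 a2 (gamma a'))) &
      forall a x, sw cop a (fun a1 a2 => (gamma a2).2 (act2 a1 x)) =
                  sw cop a (fun a1 a2 => (gamma a1).1 (act1 a2 x))].

Definition is_tensor (U V T : lmodType CC) (t : U -> V -> T) : Prop :=
  [/\ bilin t,
      forall (W : lmodType CC) (f : U -> V -> W), bilin f ->
        exists g : T -> W, lin g /\ forall u v, g (t u v) = f u v &
      forall (W : lmodType CC) (g1 g2 : T -> W), lin g1 -> lin g2 ->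
        (forall u v, g1 (t u v) = g2 (t u v)) -> forall w, g1 w = g2 w].

Definition is_smash (A : algType CC) (cop : A -> seq (A * A))
  (R : lmodType CC) (mul : R -> R -> R) (act : A -> R -> R)
  (T : lmodType CC) (t : R -> A -> T) (m : T -> T -> T) : Prop :=
  bilin m /\
  forall x a x' a', m (t x a) (t x' a') =
    sw cop a (fun a1 a2 => t (mul x (act a1 x')) (a2 * a')).

Definition alg_iso (T T' : lmodType CC) (m1 : T -> T -> T) (m2 : T' -> T' -> T')
  (phi : T -> T') : Prop :=
  [/\ lin phi, bijective phi & forall u v, phi (m1 u v) = m2 (phi u) (phi v)].

(* Main.v *)
Require Import Defs.
From mathcomp Require Import all_boot all_order all_algebra.
From mathcomp Require Import complex Rstruct.
Local Open Scope ring_scope.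

Module Helpers.
Set Implicit Arguments. Unset Strict Implicit. Unset Printing Implicit Defensive.
Import GRing.Theory.

Section Lin.
Variables (U V W : lmodType CC).

Lemma lin0 (f : U -> V) : lin f -> f 0 = 0.
Proof. move=> hf. have e := hf 1 0 0.
rewrite !scale1r addr0 in e.
apply: (addrI (f 0)). by rewrite addr0 -e. Qed.

Lemma linD (f : U -> V) : lin f -> forall u v, f (u + v) = f u + f v.
Proof. move=> hf u v; have e := hf 1 u v; by rewrite !scale1r in e. Qed.

Lemma linZ (f : U -> V) : lin f -> forall c u, f (c *: u) = c *: f u.
Proof. move=> hf c u; have e := hf c u 0; by rewrite !addr0 (lin0 hf) addr0 in e. Qed.

Lemma lin_sum (f : U -> V) I (r : seq I) (F : I -> U) :
  lin f -> f (\sum_(i <- r) F i) = \sum_(i <- r) f (F i).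
Proof.
move=> hf; elim: r => [|x r IH]; first by rewrite !big_nil (lin0 hf).
by rewrite !big_cons (linD hf) IH.
Qed.

Lemma lin_id : lin (fun u : U => u).
Proof. by []. Qed.

Lemma lin_add (f g : U -> V) : lin f -> lin g -> lin (fun u => f u + g u).
Proof. move=> hf hg c u u'; rewrite hf hg scalerDr; by rewrite addrACA. Qed.

Lemma lin_scale (f : U -> V) (k : CC) : lin f -> lin (fun u => k *: f u).
Proof. by move=> hf c u u'; rewrite hf scalerDr !scalerA mulrC. Qed.

Lemma lin_comp (g : V -> W) (f : U -> V) : lin g -> lin f -> lin (fun u => g (f u)).
Proof. by move=> hg hf c u u'; rewrite hf hg. Qed.

Lemma lin_bil1 (X : lmodType CC) (f : V -> X -> W) (h : U -> V) x :
  bilin f -> lin h -> lin (fun u => f (h u) x).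
Proof. by move=> [hf _] hh; apply: (lin_comp (hf x)). Qed.

Lemma lin_bil2 (X : lmodType CC) (f : X -> V -> W) (h : U -> V) x :
  bilin f -> lin h -> lin (fun u => f x (h u)).
Proof. by move=> [_ hf] hh; apply: (lin_comp (hf x)). Qed.

Lemma lin_scalel (f : U -> CC) (v : V) : lin f -> lin (fun u => f u *: v).
Proof. by move=> hf c u u'; rewrite hf scalerDl scalerA. Qed.

End Lin.

Section Main.
Variables (A : algType CC) (cop : A -> seq (A * A)) (eps : A -> CC) (S Sinv : A -> A).
Hypothesis hA : is_hopf cop eps S.
Hypotheses (hSK : cancel S Sinv) (hKS : cancel Sinv S).
Variables (R : lmodType CC) (mul : R -> R -> R).
Hypothesis hR : is_nd_algebra mul.
Variables (act1 act2 : A -> R -> R).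
Hypotheses (h1 : is_mod_alg cop mul act1) (h2 : is_mod_alg cop mul act2).
Variable (gamma : A -> mult R).
Hypothesis hgamma : cocycle_equiv cop S Sinv mul act1 act2 gamma.
Variables (T : lmodType CC) (t : R -> A -> T).
Hypothesis hT : is_tensor t.

Local Notation sw := (sw cop).

Section SwGen.
Variable V W : lmodType CC.

Lemma sw_lin (g : V -> W) a (f : A -> A -> V) :
  lin g -> g (sw a f) = sw a (fun x y => g (f x y)).
Proof. by move=> hg; rewrite /Defs.sw lin_sum. Qed.

Lemma sw_ext a (f f' : A -> A -> V) :
  (forall x y, f x y = f' x y) -> sw a f = sw a f'.
Proof. by move=> e; rewrite /Defs.sw; apply: eq_bigr => p _; rewrite e. Qed.

Lemma sw_add a (f g : A -> A -> V) :
  sw a (fun x y => f x y + g x y) = sw a f + sw a g.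
Proof. by rewrite /Defs.sw big_split. Qed.

Lemma sw_scale a (f : A -> A -> V) c :
  sw a (fun x y => c *: f x y) = c *: sw a f.
Proof. by rewrite /Defs.sw scaler_sumr. Qed.

Lemma sw_swap a b (f : A -> A -> A -> A -> V) :
  sw a (fun x y => sw b (fun u v => f x y u v)) =
  sw b (fun u v => sw a (fun x y => f x y u v)).
Proof. by rewrite /Defs.sw exchange_big. Qed.

End SwGen.



Section LinL.
Variables V W : lmodType CC.
Lemma lin_swin (F : V -> A -> A -> W) a :
  (forall x y, lin (fun u => F u x y)) -> lin (fun u => sw a (F u)).
Proof.
move=> hF c u u'; rewrite -(sw_scale a (F u) c) -sw_add; apply: sw_ext => x y; exact: hF.
Qed.

Lemma lin_swarg (f : A -> A -> V) (h : W -> A) :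
  bilin f -> lin h -> lin (fun u => sw (h u) f).
Proof.
move=> hf hh; case: hA => hD _ _ _ _; exact: (lin_comp (hD _ f hf) hh).
Qed.
End LinL.

Lemma coass (V : lmodType CC) (f : A -> A -> A -> V) a : trilin f ->
  sw a (fun x y => sw x (fun u v => f u v y)) = sw a (fun x y => sw y (fun u v => f x u v)).
Proof. by case: hA => _ hc _ _ _ hf; apply: hc. Qed.

Lemma Dmul (V : lmodType CC) (f : A -> A -> V) a b : bilin f ->
  sw (a * b) f = sw a (fun x y => sw b (fun u v => f (x * u) (y * v))).
Proof. by case: hA => _ _ [hm _] _ _ hf; apply: hm. Qed.

Lemma D1 (V : lmodType CC) (f : A -> A -> V) : bilin f -> sw 1 f = f 1 1.
Proof. by case: hA => _ _ [_ hm] _ _ hf; apply: hm. Qed.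

Lemma eps_lin : lin eps. Proof. by case: hA => _ _ _ [] . Qed.
Lemma eps_mul a b : eps (a * b) = eps a * eps b. Proof. by case: hA => _ _ _ [] . Qed.
Lemma eps1 : eps 1 = 1. Proof. by case: hA => _ _ _ [] . Qed.
Lemma cuL a : sw a (fun x y => eps x *: y) = a. Proof. by case: hA => _ _ _ [] . Qed.
Lemma cuR a : sw a (fun x y => eps y *: x) = a. Proof. by case: hA => _ _ _ [] . Qed.
Lemma S_lin : lin S. Proof. by case: hA => _ _ _ _ []. Qed.
Lemma apL a : sw a (fun x y => S x * y) = eps a *: 1. Proof. by case: hA => _ _ _ _ []. Qed.
Lemma apR a : sw a (fun x y => x * S y) = eps a *: 1. Proof. by case: hA => _ _ _ _ []. Qed.

Lemma Sinv_lin : lin Sinv.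
Proof.
move=> c u u'; apply: (can_inj hSK); by rewrite hKS S_lin !hKS.
Qed.

Section ModAlg.
Variable act : A -> R -> R.
Hypothesis h : is_mod_alg cop mul act.
Lemma act_bil : bilin act. Proof. by case: h. Qed.
Lemma act_one x : act 1 x = x. Proof. by case: h. Qed.
Lemma act_mulA a b x : act (a * b) x = act a (act b x). Proof. by case: h. Qed.
Lemma act_prod a x y : act a (mul x y) = sw a (fun a1 a2 => mul (act a1 x) (act a2 y)).
Proof. by case: h. Qed.
End ModAlg.

Lemma mul_bil : bilin mul. Proof. by case: hR. Qed.
Lemma mulRA x y z : mul x (mul y z) = mul (mul x y) z. Proof. by case: hR. Qed.
Lemma ndL x : (forall y, mul x y = 0) -> x = 0. Proof. by case: hR => _ _ H _; apply: H. Qed.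
Lemma ndR x : (forall y, mul y x = 0) -> x = 0. Proof. by case: hR => _ _ _ H; apply: H. Qed.
Lemma t_bil : bilin t. Proof. by case: hT. Qed.

Lemma g_mult a : is_mult mul (gamma a). Proof. by case: hgamma. Qed.
Lemma g1_lin x : lin (fun a => (gamma a).1 x). Proof. by case: hgamma => _ /(_ x) []. Qed.
Lemma g2_lin x : lin (fun a => (gamma a).2 x). Proof. by case: hgamma => _ /(_ x) []. Qed.
Lemma g_one : gamma 1 = mone R. Proof. by case: hgamma. Qed.
Lemma g_i a a' : gamma (a * a') =
  msw cop a (fun a1 a2 => mmul (gamma a1) (actM cop S Sinv act1 a2 (gamma a'))).
Proof. by case: hgamma. Qed.
Lemma g_ii a x : sw a (fun a1 a2 => (gamma a2).2 (act2 a1 x)) =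
                 sw a (fun a1 a2 => (gamma a1).1 (act1 a2 x)).
Proof. by case: hgamma. Qed.
Lemma gl_lin b : lin (gamma b).1. Proof. by case: (g_mult b). Qed.
Lemma gr_lin b : lin (gamma b).2. Proof. by case: (g_mult b). Qed.
Lemma gl_mul b x y : (gamma b).1 (mul x y) = mul ((gamma b).1 x) y. Proof. by case: (g_mult b). Qed.
Lemma gr_mul b x y : (gamma b).2 (mul x y) = mul x ((gamma b).2 y). Proof. by case: (g_mult b). Qed.
Lemma g_mid b x y : mul ((gamma b).2 x) y = mul x ((gamma b).1 y). Proof. by case: (g_mult b). Qed.

Section LinOps.
Variables V W : lmodType CC.
Variable h : V -> A.
Hypothesis hh : lin h.
Lemma lin_mulAl b : lin (fun u => h u * b).
Proof. by move=> c u u'; rewrite hh mulrDl scalerAl. Qed.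
Lemma lin_mulAr b : lin (fun u => b * h u).
Proof. by move=> c u u'; rewrite hh mulrDr scalerAr. Qed.
Lemma lin_Sc : lin (fun u => S (h u)).
Proof. exact: (lin_comp S_lin hh). Qed.
Lemma lin_Sinvc : lin (fun u => Sinv (h u)).
Proof. exact: (lin_comp Sinv_lin hh). Qed.
Lemma lin_eps : lin (fun u => eps (h u)).
Proof. exact: (lin_comp eps_lin hh). Qed.
Lemma lin_epsc (w : W) : lin (fun u => eps (h u) *: w).
Proof. exact: (lin_comp (lin_scalel w eps_lin) hh). Qed.
Lemma lin_acta act x : is_mod_alg cop mul act -> lin (fun u => act (h u) x).
Proof. move=> ha; exact: (lin_bil1 x (act_bil ha) hh). Qed.
Lemma lin_g1a x : lin (fun u => (gamma (h u)).1 x).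
Proof. exact: (lin_comp (g1_lin x) hh). Qed.
Lemma lin_g2a x : lin (fun u => (gamma (h u)).2 x).
Proof. exact: (lin_comp (g2_lin x) hh). Qed.
Lemma lin_t2 y : lin (fun u => t y (h u)).
Proof. exact: (lin_bil2 y t_bil hh). Qed.
End LinOps.

Section LinOpsR.
Variables V : lmodType CC.
Variable h : V -> R.
Hypothesis hh : lin h.
Lemma lin_actr act b : is_mod_alg cop mul act -> lin (fun u => act b (h u)).
Proof. move=> ha; exact: (lin_bil2 b (act_bil ha) hh). Qed.
Lemma lin_mul1 y : lin (fun u => mul (h u) y).
Proof. exact: (lin_bil1 y mul_bil hh). Qed.
Lemma lin_mul2 y : lin (fun u => mul y (h u)).
Proof. exact: (lin_bil2 y mul_bil hh). Qed.
Lemma lin_g1r b : lin (fun u => (gamma b).1 (h u)).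
Proof. exact: (lin_comp (gl_lin b) hh). Qed.
Lemma lin_g2r b : lin (fun u => (gamma b).2 (h u)).
Proof. exact: (lin_comp (gr_lin b) hh). Qed.
Lemma lin_t1 c : lin (fun u => t (h u) c).
Proof. exact: (lin_bil1 c t_bil hh). Qed.
End LinOpsR.

Ltac slin := intros; lazymatch goal with
| |- trilin _ => split; [|split]; slin
| |- bilin _ => split; slin
| |- _ /\ _ => split; slin
| |- is_mod_alg _ _ _ => assumption
| |- lin _ => first
   [ exact: lin_id
   | solve [ match goal with H : _ |- _ => apply H end ]
   | solve [apply lin_swarg; slin]
   | solve [apply lin_swin; slin]
   | solve [apply lin_add; slin]
   | solve [apply lin_mulAl; slin]
   | solve [apply lin_mulAr; slin]
   | solve [apply lin_Sc; slin]
   | solve [apply lin_Sinvc; slin]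
   | solve [apply lin_epsc; slin]
   | solve [apply lin_eps; slin]
   | solve [apply lin_acta; slin]
   | solve [apply lin_actr; slin]
   | solve [apply lin_g1a; slin]
   | solve [apply lin_g2a; slin]
   | solve [apply lin_g1r; slin]
   | solve [apply lin_g2r; slin]
   | solve [apply lin_mul1; slin]
   | solve [apply lin_mul2; slin]
   | solve [apply lin_t1; slin]
   | solve [apply lin_t2; slin]
   | solve [apply lin_scale; slin]
   | solve [apply lin_bil1; [eassumption|slin]]
   | solve [apply lin_bil2; [eassumption|slin]]
   | solve [eapply lin_comp; [eassumption|slin]] ]
end.


Ltac canon_in := try (under sw_ext => ? ? do canon_in);
  try ((rewrite coass; [|slin]); canon_in).
Ltac canon := try (under [in LHS]sw_ext => ? ? do canon_in);
  try ((rewrite [in LHS]coass; [|slin]); canon).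
Ltac canon2 := canon; symmetry; canon; symmetry.

Section Gen.
Variables (V : lmodType CC).

Lemma apR_gen (F : A -> V) a : lin F -> sw a (fun x y => F (x * S y)) = eps a *: F 1.
Proof. by move=> hF; rewrite -(linZ hF) -apR (sw_lin _ _ hF). Qed.
Lemma apL_gen (F : A -> V) a : lin F -> sw a (fun x y => F (S x * y)) = eps a *: F 1.
Proof. by move=> hF; rewrite -(linZ hF) -apL (sw_lin _ _ hF). Qed.
Lemma cuR_gen (g : A -> V) a : lin g -> sw a (fun x y => eps y *: g x) = g a.
Proof.
move=> hg; rewrite -{2}(cuR a) (sw_lin _ _ hg); apply: sw_ext => x y; by rewrite (linZ hg).
Qed.
Lemma cuL_gen (g : A -> V) a : lin g -> sw a (fun x y => eps x *: g y) = g a.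
Proof.
move=> hg; rewrite -{2}(cuL a) (sw_lin _ _ hg); apply: sw_ext => x y; by rewrite (linZ hg).
Qed.

Lemma Eps4 (G : A -> A -> V) y : bilin G ->
  sw y (fun p q => sw p (fun y1 r => sw r (fun y2 y3 => G (y1 * S q) (y2 * S y3))))
  = eps y *: G 1 1.
Proof.
move=> hG.
under sw_ext => p q do under sw_ext => y1 r do
  (rewrite (apR_gen (F := fun z => G (y1 * S q) z)); [|slin]).
under sw_ext => p q do (rewrite (cuR_gen (g := fun z => G (z * S q) 1)); [|slin]).
by rewrite (apR_gen (F := fun z => G z 1)); [|slin].
Qed.
End Gen.

Lemma SC (V : lmodType CC) (f : A -> A -> V) c : bilin f ->
  sw (S c) f = sw c (fun u v => f (S v) (S u)).
Proof.
move=> hf.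
transitivity ((fun b => sw (S b) f) (sw c (fun x y => eps y *: x))); first by rewrite cuR.
rewrite (sw_lin (g := fun b => sw (S b) f)); [|slin].
transitivity (sw c (fun x y => sw y (fun p q => sw p (fun y1 r => sw r (fun y2 y3 =>
   sw (S x) (fun u v => f (u * (y1 * S q)) (v * (y2 * S y3)))))))).
  apply: sw_ext => x y /=.
  rewrite (linZ S_lin).
  have hD : lin (fun b => sw b f) by slin.
  rewrite (linZ hD).
  rewrite (Eps4 (G := fun al be => sw (S x) (fun u v => f (u * al) (v * be)))); [|slin].
  by congr (_ *: _); apply: sw_ext => u v; rewrite !mulr1.
transitivity (sw c (fun z w => sw z (fun x b => sw b (fun y1 y2 => sw w (fun y3 q =>
   sw (S x) (fun u v => f (u * (y1 * S q)) (v * (y2 * S y3)))))))).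
  by canon2.
transitivity (sw c (fun z w => sw z (fun x b => sw w (fun y3 q =>
   sw (S x * b) (fun u v => f (u * S q) (v * S y3)))))).
  apply: sw_ext => z w; apply: sw_ext => x b.
  rewrite [in LHS]sw_swap; apply: sw_ext => y3 q.
  rewrite Dmul; [|slin]. rewrite [in LHS]sw_swap.
  by apply: sw_ext => y1 y2; apply: sw_ext => u v; rewrite !mulrA.
transitivity (sw c (fun z w => eps z *: sw w (fun y3 q => f (S q) (S y3)))).
  apply: sw_ext => z w.
  rewrite (apL_gen (F := fun al => sw w (fun y3 q => sw al (fun u v => f (u * S q) (v * S y3))))); [|slin].
  congr (_ *: _); apply: sw_ext => y3 q.
  by rewrite D1; [rewrite !mul1r|slin].
by rewrite (cuL_gen (g := fun w => sw w (fun y3 q => f (S q) (S y3)))); [|slin].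
Qed.
Lemma eps_S a : eps (S a) = eps a.
Proof.
have e1 : eps a = sw a (fun x y => eps (x * S y)).
  by rewrite -(sw_lin _ _ eps_lin) apR (linZ eps_lin) eps1 -[_%:A]/(eps a * 1) mulr1.
rewrite e1.
transitivity ((fun b => eps (S b)) (sw a (fun x y => eps x *: y))); first by rewrite cuL.
rewrite (sw_lin (g := fun b => eps (S b))); [|slin].
apply: sw_ext => x y /=. by rewrite eps_mul (linZ S_lin) (linZ eps_lin).
Qed.

Lemma eps_Sinv a : eps (Sinv a) = eps a.
Proof. by rewrite -{2}(hKS a) eps_S. Qed.

Lemma SinvC (V : lmodType CC) (f : A -> A -> V) c : bilin f ->
  sw (Sinv c) f = sw c (fun u v => f (Sinv v) (Sinv u)).
Proof.
move=> hf.
have := SC (f := fun u v => f (Sinv v) (Sinv u)) (Sinv c).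
rewrite hKS => ->; [|slin].
by apply: sw_ext => u v; rewrite !hSK.
Qed.

Lemma H1_gen (V : lmodType CC) (F : A -> V) b : lin F ->
  sw b (fun x y => F (Sinv y * x)) = eps b *: F 1.
Proof.
move=> hF.
have := apR_gen (F := F) (Sinv b) hF.
rewrite eps_Sinv => <-.
rewrite SinvC; [|slin].
by apply: sw_ext => u v; rewrite hKS.
Qed.

Lemma H2_gen (V : lmodType CC) (F : A -> V) b : lin F ->
  sw b (fun x y => F (y * Sinv x)) = eps b *: F 1.
Proof.
move=> hF.
have := apL_gen (F := F) (Sinv b) hF.
rewrite eps_Sinv => <-.
rewrite SinvC; [|slin].
by apply: sw_ext => u v; rewrite hKS.
Qed.

Local Notation rg b y := ((gamma b).2 y).
Local Notation lg b y := ((gamma b).1 y).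

Lemma gi2 a a' y : rg (a * a') y =
  sw a (fun a1 a2 => sw a2 (fun u v => act1 v (rg a' (act1 (Sinv u) (rg a1 y))))).
Proof. by rewrite g_i /msw /msum /= big_map. Qed.

Lemma rg_one y : rg 1 y = y. Proof. by rewrite g_one. Qed.

Lemma t_sw1 a (f : A -> A -> R) c : t (sw a f) c = sw a (fun x y => t (f x y) c).
Proof. by rewrite (sw_lin (g := fun z => t z c)); [|slin]. Qed.
Lemma act_sw act b a (f : A -> A -> R) : is_mod_alg cop mul act ->
  act b (sw a f) = sw a (fun x y => act b (f x y)).
Proof. by move=> ha; rewrite (sw_lin (g := fun z => act b z)); [|slin]. Qed.
Lemma rg_sw b a (f : A -> A -> R) : rg b (sw a f) = sw a (fun x y => rg b (f x y)).
Proof. by rewrite (sw_lin (g := fun z => rg b z)); [|slin]. Qed.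
Lemma mul_sw1 a (f : A -> A -> R) y : mul (sw a f) y = sw a (fun u v => mul (f u v) y).
Proof. by rewrite (sw_lin (g := fun z => mul z y)); [|slin]. Qed.
Lemma mul_sw2 a (f : A -> A -> R) y : mul y (sw a f) = sw a (fun u v => mul y (f u v)).
Proof. by rewrite (sw_lin (g := fun z => mul y z)); [|slin]. Qed.

Ltac pull1 := repeat (first [ rewrite t_sw1 | rewrite (act_sw _ _ _ h1) | rewrite rg_sw
   | rewrite mul_sw1 | rewrite mul_sw2 ]).
Ltac deep_in := pull1; try (under sw_ext => ? ? do deep_in).
Ltac deep := pull1; try (under [in LHS]sw_ext => ? ? do deep_in).
Ltac pull := deep; symmetry; deep; symmetry.

Lemma KeyR b y :
  sw b (fun b1 r1 => sw r1 (fun b2 r2 => sw r2 (fun b3 b4 =>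
     act1 (S b1) (rg b4 (act1 b2 (rg (S b3) y)))))) = eps b *: y.
Proof.
transitivity (sw b (fun x z => sw x (fun d1 d2 => sw d1 (fun e1 e2 =>
   act1 (S e1) (rg z (act1 e2 (rg (S d2) y))))))).
  by canon2.
transitivity (sw b (fun x z => rg (S x * z) y)).
  apply: sw_ext => x z. rewrite gi2 SC; [|slin]. apply: sw_ext => d1 d2.
  rewrite SC; [|slin]. apply: sw_ext => e1 e2. by rewrite hSK.
by rewrite (apL_gen (F := fun e => rg e y)); [rewrite rg_one|slin].
Qed.

Local Notation rgi c y :=
  (sw c (fun p q => sw p (fun u v => act1 v (rg (S q) (act1 (Sinv u) y))))).

Lemma L1 x a :
  sw a (fun a1 a2 => sw a2 (fun c1 c2 => t (rgi c1 (rg a1 x)) c2)) = t x a.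
Proof.
pull.
transitivity (sw a (fun z w => sw z (fun b q => sw b (fun a1 a2 => sw a2 (fun u v =>
  t (act1 v (rg (S q) (act1 (Sinv u) (rg a1 x)))) w))))).
  by canon2.
transitivity (sw a (fun z w => sw z (fun b q => t (rg (b * S q) x) w))).
  apply: sw_ext => z w; apply: sw_ext => b q. by rewrite gi2; pull.
transitivity (sw a (fun z w => eps z *: t x w)).
  apply: sw_ext => z w.
  by rewrite (apR_gen (F := fun e => t (rg e x) w)); [rewrite rg_one|slin].
by rewrite (cuL_gen (g := fun w => t x w)); [|slin].
Qed.

Ltac deepr_in tac := tac; try (under sw_ext => ? ? do deepr_in tac).
Ltac deepr tac := tac; try (under [in LHS]sw_ext => ? ? do deepr_in tac).
Ltac deepr2 tac := deepr tac; symmetry; deepr tac; symmetry.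

Lemma R1 x a :
  sw a (fun c1 c2 => sw c2 (fun w1 w2 => t (rg w1 (rgi c1 x)) w2)) = t x a.
Proof.
transitivity (sw a (fun c1 c2 => sw c1 (fun p q => sw p (fun u v => sw c2 (fun w1 w2 =>
   t (rg w1 (act1 v (rg (S q) (act1 (Sinv u) x)))) w2))))).
  apply: sw_ext => c1 c2. pull.
  rewrite [LHS]sw_swap; apply: sw_ext => p q; by rewrite [LHS]sw_swap.
transitivity (sw a (fun u r => sw r (fun v r3 => sw r3 (fun q r4 => sw r4 (fun w1 w2 =>
   t (rg w1 (act1 v (rg (S q) (act1 (Sinv u) x)))) w2))))).
  by canon2.
transitivity (sw a (fun u r => sw r (fun m r2 => sw m (fun v b1 => sw r2 (fun b2 r3 =>
   sw r3 (fun b3 r4 => sw r4 (fun b4 w =>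
   t (act1 (v * S b1) (rg b4 (act1 b2 (rg (S b3) (act1 (Sinv u) x))))) w))))))).
  apply: sw_ext => u r. symmetry.
  under sw_ext => m r2 do (rewrite (apR_gen (F := fun e => sw r2 (fun b2 r3 =>
   sw r3 (fun b3 r4 => sw r4 (fun b4 w =>
   t (act1 e (rg b4 (act1 b2 (rg (S b3) (act1 (Sinv u) x))))) w))))); [|slin]).
  rewrite (cuL_gen (g := fun r2 => sw r2 (fun b2 r3 =>
   sw r3 (fun b3 r4 => sw r4 (fun b4 w =>
   t (act1 1 (rg b4 (act1 b2 (rg (S b3) (act1 (Sinv u) x))))) w))))); [|slin].
  by deepr ltac:(rewrite ?(act_one h1)).
transitivity (sw a (fun u r => sw r (fun v r' => sw r' (fun b w =>
  t (act1 v (sw b (fun b1 r1 => sw r1 (fun b2 r2 => sw r2 (fun b3 b4 =>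
     act1 (S b1) (rg b4 (act1 b2 (rg (S b3) (act1 (Sinv u) x))))))))) w)))).
  symmetry. pull. deepr ltac:(rewrite -?(act_mulA h1)). by canon2.
under sw_ext => u r do under sw_ext => v r' do under sw_ext => b w do rewrite KeyR.
transitivity (sw a (fun u r => sw r (fun v w => t (act1 (v * Sinv u) x) w))).
  apply: sw_ext => u r. apply: sw_ext => v r'.
  transitivity (sw r' (fun b w => eps b *: t (act1 (v * Sinv u) x) w)).
    apply: sw_ext => b w.
    by rewrite (act_mulA h1) (linZ ((act_bil h1).2 _)) (linZ (t_bil.1 _)).
  by rewrite (cuL_gen (g := fun w => t (act1 (v * Sinv u) x) w)); [|slin].
transitivity (sw a (fun m w => sw m (fun u v => t (act1 (v * Sinv u) x) w))).
  by canon2.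
transitivity (sw a (fun m w => eps m *: t x w)).
  apply: sw_ext => m w.
  by rewrite (H2_gen (F := fun e => t (act1 e x) w)); [rewrite (act_one h1)|slin].
by rewrite (cuL_gen (g := fun w => t x w)); [|slin].
Qed.

Lemma ii_ctx (V : lmodType CC) (G : R -> V) z x x' : lin G ->
  sw z (fun a1 p1 => G (rg p1 (mul x (act2 a1 x')))) =
  sw z (fun a1 p1 => G (mul (rg a1 x) (act1 p1 x'))).
Proof.
move=> hG. rewrite -!(sw_lin _ _ hG). congr (G _).
under sw_ext => ? ? do rewrite gr_mul.
rewrite -(sw_lin (g := mul x)); [|slin].
rewrite g_ii (sw_lin (g := mul x)); [|slin].
apply: sw_ext => a1 p1. by rewrite g_mid.
Qed.

Lemma bil_sw1 (U W V : lmodType CC) (F : U -> W -> V) a (f : A -> A -> U) c :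
  bilin F -> F (sw a f) c = sw a (fun x y => F (f x y) c).
Proof. by move=> hF; rewrite (sw_lin (g := fun z => F z c)); [|slin]. Qed.

Lemma bil_sw2 (U W V : lmodType CC) (F : U -> W -> V) a (f : A -> A -> W) c :
  bilin F -> F c (sw a f) = sw a (fun x y => F c (f x y)).
Proof. by move=> hF; rewrite (sw_lin (g := fun z => F c z)); [|slin]. Qed.

Ltac pullF hF := deepr2 ltac:(repeat (first [ rewrite t_sw1 | rewrite (act_sw _ _ _ h1)
   | rewrite rg_sw | rewrite mul_sw1 | rewrite mul_sw2 | rewrite (bil_sw1 _ _ _ hF) ])).

Lemma K (V : lmodType CC) (F : R -> A -> V) x x' b' a : bilin F ->
  sw a (fun a1 a2 => sw a2 (fun p q => F (rg (p * b') (mul x (act2 a1 x'))) q))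
  = sw a (fun a1 a2 => sw a2 (fun u v => F (mul (rg a1 x) (act1 u (rg b' x'))) v)).
Proof.
move=> hF.
transitivity (sw a (fun a1 a2 => sw a2 (fun p q => sw p (fun p1 p2 => sw p2 (fun u v =>
  F (act1 v (rg b' (act1 (Sinv u) (rg p1 (mul x (act2 a1 x')))))) q))))).
  deepr ltac:(rewrite ?gi2). by pullF hF.
transitivity (sw a (fun z r => sw z (fun a1 p1 => sw r (fun u r' => sw r' (fun v q =>
  F (act1 v (rg b' (act1 (Sinv u) (rg p1 (mul x (act2 a1 x')))))) q))))).
  by canon2.
transitivity (sw a (fun z r => sw z (fun a1 p1 => sw r (fun u r' => sw r' (fun v q =>
  F (act1 v (rg b' (act1 (Sinv u) (mul (rg a1 x) (act1 p1 x'))))) q))))).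
  apply: sw_ext => z r.
  by rewrite (ii_ctx (G := fun Y => sw r (fun u r' => sw r' (fun v q =>
    F (act1 v (rg b' (act1 (Sinv u) Y))) q)))); [|slin].
transitivity (sw a (fun z r => sw z (fun a1 p1 => sw r (fun u r' => sw u (fun u1 u2 =>
  sw r' (fun v q =>
  F (act1 v (rg b' (mul (act1 (Sinv u2) (rg a1 x)) (act1 (Sinv u1 * p1) x')))) q)))))).
  apply: sw_ext => z r; apply: sw_ext => a1 p1; apply: sw_ext => u r'.
  rewrite [RHS]sw_swap. apply: sw_ext => v q.
  rewrite (act_prod h1) SinvC; [|slin].
  pullF hF. by deepr2 ltac:(rewrite ?(act_mulA h1)).
transitivity (sw a (fun z r => sw z (fun a1 m => sw m (fun p1 u1 => sw r (fun u2 r' =>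
  sw r' (fun v q =>
  F (act1 v (rg b' (mul (act1 (Sinv u2) (rg a1 x)) (act1 (Sinv u1 * p1) x')))) q)))))).
  by canon2.
transitivity (sw a (fun z r => sw r (fun u2 r' => sw r' (fun v q =>
  F (act1 v (rg b' (mul (act1 (Sinv u2) (rg z x)) x'))) q)))).
  apply: sw_ext => z r.
  under sw_ext => a1 m do (rewrite (H1_gen (F := fun e => sw r (fun u2 r' => sw r' (fun v q =>
    F (act1 v (rg b' (mul (act1 (Sinv u2) (rg a1 x)) (act1 e x')))) q)))); [|slin]).
  rewrite (cuR_gen (g := fun a1 => sw r (fun u2 r' => sw r' (fun v q =>
    F (act1 v (rg b' (mul (act1 (Sinv u2) (rg a1 x)) (act1 1 x')))) q)))); [|slin].
  by deepr ltac:(rewrite ?(act_one h1)).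
transitivity (sw a (fun z r => sw r (fun u2 r' => sw r' (fun v q => sw v (fun v1 v2 =>
  F (mul (act1 (v1 * Sinv u2) (rg z x)) (act1 v2 (rg b' x'))) q))))).
  apply: sw_ext => z r; apply: sw_ext => u2 r'; apply: sw_ext => v q.
  rewrite gr_mul (act_prod h1). pullF hF. by deepr2 ltac:(rewrite ?(act_mulA h1)).
transitivity (sw a (fun z r => sw r (fun m r' => sw m (fun u2 v1 => sw r' (fun v2 q =>
  F (mul (act1 (v1 * Sinv u2) (rg z x)) (act1 v2 (rg b' x'))) q))))).
  by canon2.
apply: sw_ext => z r.
under sw_ext => m r' do (rewrite (H2_gen (F := fun e => sw r' (fun v2 q =>
    F (mul (act1 e (rg z x)) (act1 v2 (rg b' x'))) q))); [|slin]).
rewrite (cuL_gen (g := fun r' => sw r' (fun v2 q =>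
    F (mul (act1 1 (rg z x)) (act1 v2 (rg b' x'))) q))); [|slin].
by deepr ltac:(rewrite ?(act_one h1)).
Qed.

Lemma main (m1 m2 : T -> T -> T) :
  is_smash cop mul act1 t m1 -> is_smash cop mul act2 t m2 ->
  exists phi : T -> T, alg_iso m1 m2 phi.
Proof.
move=> [hm1b hm1] [hm2b hm2].
have [_ hU huniq] := hT.
have [psi [psi_lin psiE]] :
    exists g : T -> T, lin g /\ forall y c, g (t y c) = sw c (fun c1 c2 => t (rg c1 y) c2).
  by apply: hU; slin.
have [chi [chi_lin chiE]] :
    exists g : T -> T, lin g /\ forall y c, g (t y c) = sw c (fun c1 c2 => t (rgi c1 y) c2).
  by apply: hU; slin.
have chipsi : forall w, chi (psi w) = w.
  apply: (huniq _ (fun w => chi (psi w)) id).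
  - exact: lin_comp chi_lin psi_lin.
  - by [].
  move=> y c /=. rewrite psiE (sw_lin _ _ chi_lin).
  under sw_ext => ? ? do rewrite chiE.
  exact: L1.
have psichi : forall w, psi (chi w) = w.
  apply: (huniq _ (fun w => psi (chi w)) id).
  - exact: lin_comp psi_lin chi_lin.
  - by [].
  move=> y c /=. rewrite chiE (sw_lin _ _ psi_lin).
  under sw_ext => ? ? do rewrite psiE.
  exact: R1.
have psi_gen : forall x a x' a', psi (m2 (t x a) (t x' a')) = m1 (psi (t x a)) (psi (t x' a')).
  move=> x a x' a'.
  rewrite hm2 (sw_lin _ _ psi_lin) !psiE.
  rewrite (bil_sw1 _ _ _ hm1b).
  transitivity (sw a (fun a1 a2 => sw a' (fun b1 b2 =>
     m1 (t (rg a1 x) a2) (t (rg b1 x') b2)))); last first.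
    apply: sw_ext => a1 a2. symmetry. exact: bil_sw2.
  Show.
  transitivity (sw a' (fun b1 b2 => sw a (fun a1 a2 => sw a2 (fun p q =>
     t (rg (p * b1) (mul x (act2 a1 x'))) (q * b2))))).
    rewrite [RHS]sw_swap. apply: sw_ext => a1 a2.
    rewrite psiE Dmul; [|slin]. exact: sw_swap.
  transitivity (sw a' (fun b1 b2 => sw a (fun a1 a2 => sw a2 (fun u v =>
     t (mul (rg a1 x) (act1 u (rg b1 x'))) (v * b2))))).
    apply: sw_ext => b1 b2. apply: (K (F := fun y c => t y (c * b2))). slin.
  rewrite [LHS]sw_swap. apply: sw_ext => a1 a2. apply: sw_ext => b1 b2.
  by rewrite hm1.
have psi_mul : forall u v, psi (m2 u v) = m1 (psi u) (psi v).
  move=> u v.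
  have step1 : forall x' a' u, psi (m2 u (t x' a')) = m1 (psi u) (psi (t x' a')).
    move=> x' a'; apply: (huniq _ (fun u => psi (m2 u (t x' a'))) (fun u => m1 (psi u) (psi (t x' a')))).
    - exact: lin_comp psi_lin (hm2b.1 _).
    - exact: lin_comp (hm1b.1 _) psi_lin.
    - move=> y c; exact: psi_gen.
  apply: (huniq _ (fun v => psi (m2 u v)) (fun v => m1 (psi u) (psi v))).
  - exact: lin_comp psi_lin (hm2b.2 _).
  - exact: lin_comp (hm1b.2 _) psi_lin.
  - move=> y c; exact: step1.
exists chi; split.
- exact: chi_lin.
- by exists psi.
- move=> u v. apply: (can_inj chipsi).
  by rewrite psichi psi_mul !psichi.
Qed.
End Main.

End Helpers.

Unset Implicit Arguments. Set Strict Implicit. Set Printing Implicit Defensive.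

Theorem proposition5p13
  (A : algType CC) (cop : A -> seq (A * A)) (eps : A -> CC) (S Sinv : A -> A)
  (hA : is_hopf cop eps S)
  (hSK : cancel S Sinv) (hKS : cancel Sinv S)
  (R : lmodType CC) (mul : R -> R -> R) (hR : is_nd_algebra mul)
  (act1 act2 : A -> R -> R)
  (h1 : is_mod_alg cop mul act1) (h2 : is_mod_alg cop mul act2)
  (gamma : A -> mult R) (hgamma : cocycle_equiv cop S Sinv mul act1 act2 gamma)
  (T : lmodType CC) (t : R -> A -> T) (hT : is_tensor t)
  (m1 m2 : T -> T -> T)
  (hm1 : is_smash cop mul act1 t m1) (hm2 : is_smash cop mul act2 t m2) :
  exists phi : T -> T, alg_iso m1 m2 phi.
Proof.
exact: (Helpers.main hA hSK hKS hR h1 h2 hgamma hT hm1 hm2).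
Qed.
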